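(* Let $m,n\in \mathbb{Z}$ and let $c$ be a nonzero integer with $c\mid n^2$, and let $f(X)=X^6+(n^2/c-2m)X^4+(m^2-2n)X^2+c$. Then $\mathrm{Gal}(f/\mathbb{Q})\cong C_6$ if and only if all of the following hold: (i) $-c$ is not a square of an integer; (ii) $g(X):=X^3+(n^2/c-2m)X^2+(m^2-2n)X+c$ (so that $f(X)=g(X^2)$) is irreducible over $\mathbb{Q}$; (iii) $d(m,n,c):= -(4m^3c - m^2n^2 - 18mnc + 4n^3 + 27c^2)$ is a square of an integer.
   Context: $\mathrm{Gal}(f/\mathbb{Q})$ denotes the Galois group of the splitting field of $f$ over $\mathbb{Q}$, and $C_6$ the cyclic group of order $6$. *)

(* Defs.v *)
From HB Require Import structures.
From mathcomp Require Import all_boot all_order all_algebra all_fingroup all_solvable all_field.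
Set Implicit Arguments. Unset Strict Implicit. Unset Printing Implicit Defensive.
Import GRing.Theory Num.Theory.
Local Open Scope ring_scope.

(* The coefficient n^2/c (exact integer division, since c | n^2). *)
Definition coefA (m n c : int) : int := ((n ^+ 2) %/ c)%Z - 2 * m.
Definition coefB (m n : int) : int := m ^+ 2 - 2 * n.

Definition fpoly (m n c : int) : {poly rat} :=
  'X^6 + (coefA m n c)%:~R%:P * 'X^4 + (coefB m n)%:~R%:P * 'X^2 + (c%:~R)%:P.

Definition gpoly (m n c : int) : {poly rat} :=
  'X^3 + (coefA m n c)%:~R%:P * 'X^2 + (coefB m n)%:~R%:P * 'X + (c%:~R)%:P.

Definition dmnc (m n c : int) : int :=
  - (4 * m ^+ 3 * c - m ^+ 2 * n ^+ 2 - 18 * m * n * c + 4 * n ^+ 3 + 27 * c ^+ 2).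

(* Main.v *)
Require Import Defs.
From HB Require Import structures.
From mathcomp Require Import all_boot all_order all_algebra all_fingroup all_solvable all_field.
From mathcomp Require Import ring.
Import GRing.Theory Num.Theory.
Local Open Scope ring_scope.



Lemma sCX (L : fieldType) (x : L) j k : (j < k)%N -> (size (x%:P * 'X^j)%R <= k)%N.
Proof.
move=> jk; rewrite mul_polyC (leq_trans (size_scale_leq _ _)) // size_polyXn //.
Qed.
Lemma sCX1 (L : fieldType) (x : L) k : (1 < k)%N -> (size (x%:P * 'X)%R <= k)%N.
Proof. by move=> jk; rewrite -['X]expr1 sCX. Qed.
Lemma sC (L : fieldType) (x : L) k : (0 < k)%N -> (size (x%:P) <= k)%N.
Proof. by move=> k0; rewrite (leq_trans (size_polyC_leq1 _)). Qed.
Lemma sD (L : fieldType) (p q : {poly L}) k : (size p <= k)%N -> (size q <= k)%N -> (size (p + q)%R <= k)%N.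
Proof. by move=> hp hq; rewrite (leq_trans (size_add _ _)) // geq_max hp hq. Qed.
Lemma sN (L : fieldType) (p : {poly L}) k : (size p <= k)%N -> (size (- p)%R <= k)%N.
Proof. by rewrite size_opp. Qed.
Lemma sXn (L : fieldType) (p : {poly L}) k : (size p <= k)%N -> size ('X^k + p)%R = k.+1.
Proof. by move=> hp; rewrite size_addl ?size_polyXn. Qed.

Ltac sbound := repeat first [ apply: sD | apply: sN | apply: sCX; done | apply: sCX1; done | apply: sC; done ].

Lemma ratsq (q : rat) (z : int) : q ^+ 2 = z%:~R -> exists k : int, q = k%:~R.
Proof.
move=> hq; exists (numq q).
have e : (numq q) ^+ 2 = z * (denq q) ^+ 2.
  apply/eqP; rewrite -(eqr_int rat) rmorphXn rmorphM rmorphXn /= numqE.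
  by rewrite exprMn hq.
have e' : (`|numq q| ^ 2 = `|z| * (`|denq q| * `|denq q|))%N.
  by rewrite -abszX e abszM abszX expnS expn1.
have dv : (`|denq q| %| `|numq q| ^ 2)%N by rewrite e' dvdn_mull // dvdn_mulr.
have co : coprime `|denq q| (`|numq q| ^ 2).
  by rewrite coprimeXr // coprime_sym coprime_num_den.
have d1 : denq q = 1.
  by rewrite -absz_denq -(gcdn_idPl dv) (eqP co).
by rewrite numqE d1 mulr1.
Qed.



Local Open Scope group_scope.
Lemma Zp6_cyclic : cyclic (Zp 6).
Proof. by apply/cyclicP; exists Zp1; exact: Zp_cycle. Qed.

Lemma cyc6 (gT : finGroupType) (G N1 N2 : {group gT}) :
  #|G| = 6 -> N1 <| G -> N2 <| G -> #|N1| = 2 -> #|N2| = 3 -> (G \isog Zp 6)%g.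
Proof.
move=> cG nN1 nN2 c1 c2.
have co : coprime #|N1| #|N2| by rewrite c1 c2.
have ti := coprime_TIg co.
have cyc1 : cyclic N1 by apply: prime_cyclic; rewrite c1.
have cyc2 : cyclic N2 by apply: prime_cyclic; rewrite c2.
have sN1 := normal_sub nN1; have sN2 := normal_sub nN2.
have cent : N2 \subset 'C(N1).
  apply/commG1P; apply/trivgP; rewrite -ti setIC.
  apply: commg_subI; rewrite subsetI subxx /=.
  - exact: subset_trans sN2 (normal_norm nN1).
  - exact: subset_trans sN1 (normal_norm nN2).
have eqG : (N1 * N2)%g = G.
  apply/eqP; rewrite eqEcard mulG_subG sN1 sN2 /= TI_cardMg // c1 c2 cG //.
have cycG : cyclic G by rewrite -eqG cyclicM.
rewrite (isog_cyclic_card _ cycG) Zp6_cyclic card_Zp // cG //.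
Qed.

Lemma cyc6inv (gT : finGroupType) (G : {group gT}) :
  (G \isog Zp 6)%g -> #|G| = 6 /\ abelian G.
Proof.
move=> iso; split; first by rewrite (card_isog iso) card_Zp.
by apply: cyclic_abelian; rewrite (isog_cyclic iso) Zp6_cyclic.
Qed.

Local Close Scope group_scope.
Section Gen.
Variable L : splittingFieldType rat.

Lemma pcharL : [pchar L] =i pred0.
Proof. by move=> p; rewrite pchar_lalg pchar_num. Qed.

Lemma galL : galois 1 {:L}.
Proof.
rewrite /galois subvf normalFieldf andbT /=.
apply/separableP => x _; apply: pcharf0_separable => p; exact: pcharL.
Qed.

Lemma cardG : #|('Gal({:L} / 1%VS))%g| = \dim {:L}.
Proof. by rewrite -galois_dim ?galL // dimv1 divn1. Qed.

Lemma dim_adj (x : L) : \dim <<1; x>> = adjoin_degree 1 x.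
Proof. by rewrite dim_Fadjoin dimv1 muln1. Qed.

Lemma T1 (p : {poly rat}) (x : L) : p != 0 -> root (map_poly (in_alg L) p) x ->
  (\dim <<1; x>> <= (size p).-1)%N.
Proof.
move=> p0 hx; have hd := minPoly_dvdp (alg_polyOver 1 p) hx.
have := dvdp_leq _ hd; rewrite map_poly_eq0 p0 size_map_poly size_minPoly dim_adj => /(_ isT).
by case: (size p).
Qed.

Lemma T2 (p : {poly rat}) (x : L) : irreducible_poly p -> root (map_poly (in_alg L) p) x ->
  \dim <<1; x>> = (size p).-1.
Proof.
move=> irr hx; have /polyOver1P[q Dq] := minPolyOver 1 x.
have dv : q %| p by rewrite -(dvdp_map (in_alg L)) -Dq minPoly_dvdp ?alg_polyOver.
have sq : size q = (\dim <<1; x>>).+1 by rewrite -(size_map_poly (in_alg L)) -Dq size_minPoly dim_adj.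
have s1 : size q != 1%N by rewrite sq eqSS -lt0n adim_gt0.
by rewrite -(eqp_size (irr q s1 dv)) sq.
Qed.

Lemma T3 (x : L) : (x \in 1%VS) = (\dim <<1; x>> == 1%N).
Proof. by rewrite dim_adj adjoin_deg_eq1. Qed.

Lemma T4 (x : L) : x \in 1%VS -> exists q : rat, x = q%:A.
Proof. by move/vlineP => [q ->]; exists q. Qed.


Lemma normal_of_abelian (E : {subfield L}) : abelian ('Gal({:L} / 1%VS))%g -> normalField 1 E.
Proof.
move=> ab; have sE : (1 <= E <= fullv)%VS by rewrite sub1v subvf.
have galE : galois E fullv := galoisS sE (galL).
have nE : ('Gal(fullv / E) <| 'Gal(fullv / 1%VS))%g.
  by rewrite -(sub_abelian_normal _ ab) galS // sub1v.
have := normal_fixedField_galois (galL) nE.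
by have /galois_fixedField -> := galE; case/and3P.
Qed.

Lemma normal_card (E : {subfield L}) : normalField 1 E ->
  ('Gal(fullv / E) <| 'Gal(fullv / 1%VS))%g /\ #|('Gal(fullv / E))%g| = (\dim {:L} %/ \dim E)%N.
Proof.
move=> nE; have sE : (1 <= E <= fullv)%VS by rewrite sub1v subvf.
split; first exact: (normalField_normal sE nE).
by rewrite -galois_dim // (galoisS sE (galL)).
Qed.


Lemma map_quad (u v : rat) (x : L) :
  (map_poly (in_alg L) ('X^2 + u%:P * 'X + v%:P)).[x] = x^+2 + u%:A * x + v%:A.
Proof.
rewrite !rmorphD /= (map_polyXn (in_alg L)) rmorphM /= !(map_polyC (in_alg L)).
by rewrite (map_polyX (in_alg L)) !hornerE.
Qed.

Lemma memA (E : {subfield L}) (q : rat) : q%:A \in E.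
Proof. by rewrite memvZ // mem1v. Qed.

End Gen.

Lemma size_quad (u v : rat) : size ('X^2 + u%:P * 'X + v%:P) = 3%N.
Proof. by rewrite -addrA sXn //; sbound. Qed.

Lemma T1q (L : splittingFieldType rat) (u v : rat) (x : L) :
  x^+2 + u%:A * x + v%:A = 0 -> (\dim <<1; x>> <= 2)%N.
Proof.
move=> e; have := @T1 L ('X^2 + u%:P * 'X + v%:P) x.
rewrite size_quad; apply; first by rewrite -size_poly_eq0 size_quad.
by apply/rootP; rewrite map_quad e.
Qed.

Lemma irr_noroot (p : {poly rat}) y : irreducible_poly p -> size p != 2%N -> ~~ root p y.
Proof.
move=> irr s2; apply/negP => r.
have dv : 'X - y%:P %| p by rewrite dvdp_XsubCl.
have s1 : size ('X - y%:P) != 1%N by rewrite size_XsubC.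
have := eqp_size (irr _ s1 dv).
by rewrite size_XsubC => e; rewrite -e in s2.
Qed.



Definition hq (m n c : int) : {poly rat} :=
  'X^3 + (m%:~R)%:P * 'X^2 + (n%:~R)%:P * 'X + (c%:~R)%:P.

Section S.
Variables (m n c : int) (L : splittingFieldType rat).
Hypotheses (hc : c != 0) (hdvd : (c %| n ^+ 2)%Z).
Hypothesis hL : splittingFieldFor 1%VS (map_poly (in_alg L) (fpoly m n c)) {:L}.
Let fL := map_poly (in_alg L) (fpoly m n c).
Local Notation mL := (m%:~R : L).
Local Notation nL := (n%:~R : L).
Local Notation cL := (c%:~R : L).
Local Notation aL := ((Defs.coefA m n c)%:~R : L).
Local Notation bL := ((Defs.coefB m n)%:~R : L).

Lemma fLE : fL = 'X^6 + aL%:P * 'X^4 + bL%:P * 'X^2 + cL%:P.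
Proof.
rewrite /fL /fpoly; move: (Defs.coefA m n c) (Defs.coefB m n) => a b.
rewrite !rmorphD /= !rmorphM /= !(map_polyX (in_alg L)) !(map_polyC (in_alg L)) /=.
by rewrite !scaler_int !rmorph_int; ring.
Qed.

Lemma Ac : Defs.coefA m n c * c = n ^+ 2 - 2 * m * c.
Proof. by rewrite /Defs.coefA mulrBl divzK. Qed.

Lemma AcL : aL * cL = nL ^+ 2 - 2 * mL * cL.
Proof. rewrite -rmorphM Ac rmorphB !rmorphM /=; ring. Qed.

Lemma bLE : bL = mL ^+ 2 - 2 * nL.
Proof. rewrite /Defs.coefB rmorphB !rmorphM /=; ring. Qed.

Lemma iLE (z : int) : (z%:~R : L) = in_alg L (z%:~R : rat).
Proof. by rewrite rmorph_int. Qed.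

Lemma cL0 : cL != 0.
Proof. by rewrite iLE fmorph_eq0 intr_eq0. Qed.

Lemma size_fL : size fL = 7%N.
Proof. by rewrite fLE -addrA -addrA sXn //; sbound. Qed.

Lemma dvd_root (q : {poly L}) : q %| fL -> (1 < size q)%N -> exists z, root q z.
Proof.
have [rs Hrs _] := hL; rewrite -/fL in Hrs.
rewrite (eqp_dvdr _ Hrs) => /dvdp_prod_XsubC[msk Hm].
rewrite (eqp_size Hm); case: (mask msk rs) Hm => [|z zs] Hm.
  by rewrite big_nil size_poly1.
move=> _; exists z; rewrite (eqp_root Hm) big_cons rootM root_XsubC eqxx //.
Qed.


Lemma exists_s : exists s : L, s ^+ 2 = - cL.
Proof.
have [z1 hz1] : exists z, root fL z by apply: dvd_root; rewrite ?dvdpp ?size_fL.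
have e1 : z1^+6 + aL * z1^+4 + bL * z1^+2 + cL = 0.
  by move/rootP: hz1; rewrite fLE !hornerE.
set u := z1 ^+ 2.
have hcu : cL = -(u^+3 + aL*u^+2 + bL*u).
  by apply: subr0_eq; rewrite -e1 /u; ring.
pose Q1 := 'X^4 + (u + aL)%:P * 'X^2 + (u^+2 + aL*u + bL)%:P.
have fQ1 : fL = ('X^2 - u%:P) * Q1.
  by rewrite fLE hcu /Q1 !(polyCD, polyCN, polyCM, polyC_exp); ring.
have [z2 hz2] : exists z, root Q1 z.
  apply: dvd_root; first by rewrite fQ1 dvdp_mulIr.
  by rewrite /Q1 -addrA sXn //; sbound.
have e2 : z2^+4 + (u+aL)*z2^+2 + (u^+2 + aL*u + bL) = 0.
  by move/rootP: hz2; rewrite /Q1 !hornerE.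
set v := z2 ^+ 2.
pose w := -(v + u + aL).
have hQ1 : u^+2 + aL*u + bL = -(v^+2 + (u+aL)*v).
  by apply: subr0_eq; rewrite -e2 /v; ring.
have fQ2 : fL = ('X^2 - u%:P) * ('X^2 - v%:P) * ('X^2 - w%:P).
  by rewrite fQ1 /Q1 hQ1 /w !(polyCD, polyCN, polyCM, polyC_exp); ring.
have [z3 hz3] : exists z, root ('X^2 - w%:P) z.
  apply: dvd_root; first by rewrite fQ2 dvdp_mulIr.
  by rewrite size_XnsubC.
have e3 : z3^+2 = w by move/rootP: hz3; rewrite !hornerE => /subr0_eq.
exists (z1*z2*z3).
rewrite hcu.
have -> : u^+3 + aL*u^+2 + bL*u = u * (u^+2 + aL*u + bL) by ring.
by rewrite hQ1 !exprMn e3 /w /v /u; ring.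
Qed.

Lemma exists_t : exists t1 t2 t3 : L,
  [/\ mL = -(t1*t2 + t2*t3 + t3*t1), nL = t1*t2*t3*(t1+t2+t3) & cL = -(t1*t2*t3)^+2].
Proof.
have [s hs] := exists_s.
have hcs : cL = -(s^+2) by rewrite hs opprK.
have [t [hn ha]] : exists t, nL = -(s*t) /\ aL = -(t^+2) - 2*mL.
  exists (s * nL / cL); split.
    have -> : s * (s * nL / cL) = s^+2 * nL / cL by rewrite !mulrA expr2.
    by rewrite hs; field; apply: cL0.
  have -> : aL = (nL^+2 - 2*mL*cL) / cL by rewrite -AcL mulfK ?cL0.
  rewrite !exprMn hs; field; apply: cL0.
have hb : bL = mL^+2 + 2 * s * t by rewrite bLE hn; ring.
pose hs1 := 'X^3 + (t%:P * 'X^2 - mL%:P * 'X - s%:P).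
pose hs2 := 'X^3 - t%:P * 'X^2 - mL%:P * 'X + s%:P.
have fh : fL = hs1 * hs2.
  by rewrite fLE ha hb hcs /hs1 /hs2 !(polyCD, polyCN, polyCM, polyC_exp); ring.
have [t1 ht1] : exists z, root hs1 z.
  apply: dvd_root; first by rewrite fh dvdp_mulIl.
  by rewrite /hs1 sXn //; sbound.
have es : s = t1^+3 + t * t1^+2 - mL * t1.
  by move/rootP: ht1; rewrite /hs1 !hornerE /= => e; apply: subr0_eq; rewrite -oppr0 -e /=; ring.
pose Q := 'X^2 + ((t1 + t)%:P * 'X + (t1^+2 + t*t1 - mL)%:P).
have hQ : hs1 = ('X - t1%:P) * Q.
  by rewrite /hs1 /Q es !(polyCD, polyCN, polyCM, polyC_exp); ring.
have [t2 ht2] : exists z, root Q z.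
  apply: dvd_root; first by rewrite fh hQ; apply: dvdp_mulr; apply: dvdp_mulIr.
  by rewrite /Q sXn //; sbound.
have em : mL = t2^+2 + (t1 + t) * t2 + t1^+2 + t * t1.
  by move/rootP: ht2; rewrite /Q !hornerE /= => e; apply: subr0_eq; rewrite -oppr0 -e /=; ring.
exists t1, t2, (-(t + t1 + t2)); split.
- by rewrite em; ring.
- by rewrite hn es em; ring.
- by rewrite hcs es em; ring.
Qed.


Variables t1 t2 t3 : L.
Hypotheses (hm : mL = -(t1*t2 + t2*t3 + t3*t1)) (hn : nL = t1*t2*t3*(t1+t2+t3))
  (hct : cL = -(t1*t2*t3)^+2).

Lemma t123 : t1 * t2 * t3 != 0.
Proof. by apply: contra (cL0) => /eqP e; rewrite hct e expr0n oppr0. Qed.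

Lemma t1nz : t1 != 0. Proof. by have := t123; rewrite !mulf_eq0 !negb_or => /andP[/andP[]]. Qed.
Lemma t2nz : t2 != 0. Proof. by have := t123; rewrite !mulf_eq0 !negb_or => /andP[/andP[]]. Qed.
Lemma t3nz : t3 != 0. Proof. by have := t123; rewrite !mulf_eq0 !negb_or => /andP[/andP[]]. Qed.

Lemma aLt : aL = -(t1^+2 + t2^+2 + t3^+2).
Proof.
have -> : aL = (nL^+2 - 2*mL*cL) / cL by rewrite -AcL mulfK ?cL0.
rewrite hn hm hct; field.
by rewrite oppr_eq0 expf_neq0 // t123.
Qed.

Lemma fL_t z : fL.[z] = (z^+2 - t1^+2) * (z^+2 - t2^+2) * (z^+2 - t3^+2).
Proof. rewrite fLE !hornerE /= aLt bLE hm hn hct; ring. Qed.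

Lemma gen (E : {subfield L}) : t1 \in E -> t2 \in E -> t3 \in E -> (fullv <= E)%VS.
Proof.
move=> h1 h2 h3; have [rs Hrs defL] := hL; rewrite -defL.
apply/Fadjoin_seqP; split; first exact: sub1v.
move=> z zin; have : root fL z by rewrite (eqp_root Hrs) root_prod_XsubC.
move/rootP/eqP; rewrite fL_t.
have sq (x : L) : z^+2 - x^+2 = (z - x) * (z + x) by ring.
rewrite !sq !mulf_eq0 -!orbA !subr_eq0 !addr_eq0 => H.
do 5 (case/orP: H => [/eqP -> | H]; first by rewrite ?rpredN).
by move/eqP: H => ->; rewrite rpredN.
Qed.


Let s := t1 * t2 * t3.
Let r1 := t2 * t3.
Let r2 := t1 * t3.
Let r3 := t1 * t2.
Let hqL := map_poly (in_alg L) (hq m n c).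
Let gL := map_poly (in_alg L) (gpoly m n c).
Let dlt := (r1 - r2) * (r1 - r3) * (r2 - r3).

Lemma gen2 (E : {subfield L}) : s \in E -> r1 \in E -> r2 \in E -> r3 \in E -> (fullv <= E)%VS.
Proof.
move=> hs h1 h2 h3; apply: gen.
- have -> : t1 = s / r1 by rewrite /s /r1; field; rewrite t2nz t3nz.
  by rewrite rpredM ?rpredV.
- have -> : t2 = s / r2 by rewrite /s /r2; field; rewrite t1nz t3nz.
  by rewrite rpredM ?rpredV.
- have -> : t3 = s / r3 by rewrite /s /r3; field; rewrite t1nz t2nz.
  by rewrite rpredM ?rpredV.
Qed.

Lemma hqLE0 : hqL = 'X^3 + mL%:P * 'X^2 + nL%:P * 'X + cL%:P.
Proof.
rewrite /hqL /hq.
rewrite !rmorphD /= !rmorphM /= !(map_polyX (in_alg L)) !(map_polyC (in_alg L)) /=.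
by rewrite !scaler_int !rmorph_int; ring.
Qed.

Lemma hqLE : hqL = ('X - r1%:P) * ('X - r2%:P) * ('X - r3%:P).
Proof.
rewrite hqLE0 hm hn hct /r1 /r2 /r3 !(polyCD, polyCN, polyCM, polyC_exp); ring.
Qed.

Lemma gLE0 : gL = 'X^3 + aL%:P * 'X^2 + bL%:P * 'X + cL%:P.
Proof.
rewrite /gL /gpoly; move: (Defs.coefA m n c) (Defs.coefB m n) => a b.
rewrite !rmorphD /= !rmorphM /= !(map_polyX (in_alg L)) !(map_polyC (in_alg L)) /=.
by rewrite !scaler_int !rmorph_int; ring.
Qed.

Lemma gL_t y : gL.[y] = (y - t1^+2) * (y - t2^+2) * (y - t3^+2).
Proof. rewrite gLE0 !hornerE /= aLt bLE hm hn hct; ring. Qed.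

Lemma dL : ((dmnc m n c)%:~R : L) = dlt ^+ 2.
Proof.
rewrite /dmnc !(rmorphN, rmorphD, rmorphB, rmorphM, rmorphXn) /=.
rewrite hm hn hct /dlt /r1 /r2 /r3; ring.
Qed.


Lemma size_hq : size (hq m n c) = 4%N.
Proof. by rewrite /hq -addrA -addrA sXn //; sbound. Qed.

Lemma size_gp : size (gpoly m n c) = 4%N.
Proof. by rewrite /gpoly -addrA -addrA sXn //; sbound. Qed.

Lemma memI (E : {subfield L}) (z : int) : (z%:~R : L) \in E.
Proof. by rewrite iLE memA. Qed.

Lemma natL_nz (k : nat) : (0 < k)%N -> (k%:R : L) != 0.
Proof. by move=> k0; rewrite -(rmorph_nat (in_alg L)) fmorph_eq0 pnatr_eq0 -lt0n. Qed.

Lemma inalg_div (z : int) (k : nat) : ((z%:~R / k%:R : rat)%:A : L) = z%:~R / k%:R.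
Proof. by rewrite -[_%:A]/(in_alg L _) fmorph_div rmorph_int rmorph_nat. Qed.

Lemma s2c : s ^+ 2 = - cL.
Proof. by rewrite hct opprK. Qed.

Lemma dim_s_le : (\dim <<1; s>> <= 2)%N.
Proof.
apply: (@T1q L 0 (c%:~R)).
by rewrite scale0r mul0r addr0 -[_%:A]/(in_alg L _) -iLE s2c addNr.
Qed.

Lemma root_r1 : root hqL r1. Proof. by rewrite hqLE !rootM !root_XsubC eqxx. Qed.
Lemma root_r2 : root hqL r2. Proof. by rewrite hqLE !rootM !root_XsubC eqxx ?orbT. Qed.
Lemma root_r3 : root hqL r3. Proof. by rewrite hqLE !rootM !root_XsubC eqxx ?orbT. Qed.

Lemma nat2 : (2 : L) \in (1%VS : {vspace L}).
Proof. by rewrite -(rmorph_nat (in_alg L)) memA. Qed.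


Lemma hq_irr : irreducible_poly (gpoly m n c) -> irreducible_poly (hq m n c).
Proof.
move=> girr; apply: cubic_irreducible; first by rewrite size_hq.
move=> x; apply/negP => /rootP hx.
have hx0 : x^+3 + m%:~R * x^+2 + n%:~R * x + c%:~R = 0.
  by rewrite -hx /hq !hornerE /=; ring.
have c0 : (c%:~R : rat) != 0 by rewrite intr_eq0.
have x0 : x != 0.
  by apply: contraNneq c0 => x0; apply/eqP; rewrite -hx0 x0; ring.
have Ar : (Defs.coefA m n c)%:~R = ((n%:~R)^+2 - 2 * m%:~R * c%:~R) / (c%:~R : rat).
  apply: (mulIf c0); rewrite mulfVK // -rmorphM Ac rmorphB !rmorphM /=; ring.
have Br : (Defs.coefB m n)%:~R = (m%:~R)^+2 - 2 * (n%:~R : rat).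
  by rewrite /Defs.coefB rmorphB !rmorphM /=; ring.
have : root (gpoly m n c) (- c%:~R / x^+2).
  apply/rootP; rewrite /gpoly !hornerE /= Ar Br.
  apply: (@mulfI _ (x^+6)); first by rewrite expf_neq0.
  rewrite mulr0.
  transitivity (- (c%:~R) * (x^+3 + m%:~R * x^+2 + n%:~R * x + c%:~R) *
     ((-x)^+3 + m%:~R * (-x)^+2 + n%:~R * (-x) + c%:~R)); first by field; rewrite c0 x0.
  by rewrite hx0 mulr0 mul0r.
by apply/negP; apply: irr_noroot girr _; rewrite size_gp.
Qed.


Lemma deg3 : irreducible_poly (hq m n c) -> forall x, root hqL x -> \dim <<1; x>> = 3%N.
Proof. by move=> irr x hx; rewrite (@T2 L _ _ irr hx) size_hq. Qed.

Lemma dim_s2 : ~ (exists k : int, - c = k ^+ 2) -> \dim <<1; s>> = 2%N.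
Proof.
move=> nsq; apply/eqP; rewrite eqn_leq dim_s_le /= ltn_neqAle eq_sym -T3 adim_gt0 andbT.
apply/negP => /T4 [q hq']; apply: nsq.
have : in_alg L (q^+2) = in_alg L ((- c)%:~R) by rewrite rmorphXn /= -hq' -[_%:A]/(in_alg L _) -iLE s2c rmorphN.
move/fmorph_inj => e; have [k hk] := @ratsq q (- c) e.
by exists k; apply/eqP; rewrite -(eqr_int rat) -e hk rmorphXn.
Qed.

Lemma dlt1 : (exists k : int, dmnc m n c = k ^+ 2) -> dlt \in 1%VS.
Proof.
case=> k hk; have := dL; rewrite hk rmorphXn /= => e.
have : (dlt - k%:~R) * (dlt + k%:~R) == 0 by rewrite -subr_sqr -e subrr.
rewrite mulf_eq0 subr_eq0 addr_eq0 => /orP[] /eqP ->; by rewrite ?rpredN memI.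
Qed.

Lemma D0 : irreducible_poly (hq m n c) -> (r1 - r2) * (r1 - r3) != 0.
Proof.
move=> irr; apply/negP => /eqP D.
have : (\dim <<1; r1>> <= 2)%N.
  apply: (@T1q L ((2 * m)%:~R / 3%:R) (n%:~R / 3%:R)).
  rewrite !inalg_div; apply: (@mulfI _ 3%:R); first exact: natL_nz.
  rewrite mulr0 -D rmorphM /= hm hn /r1 /r2 /r3; field; exact: natL_nz.
by rewrite (deg3 irr _ root_r1).
Qed.


Lemma memN (E : {subfield L}) (k : nat) : (k%:R : L) \in E.
Proof. by rewrite -(rmorph_nat (in_alg L)) memA. Qed.

Lemma K1_r : irreducible_poly (hq m n c) -> dlt \in 1%VS ->
  r2 \in <<1; r1>>%VS /\ r3 \in <<1; r1>>%VS.
Proof.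
move=> irr hd; have D := D0 irr.
have hdK : dlt \in <<1; r1>>%VS := subvP (sub1v _) _ hd.
have hr1 := memv_adjoin 1 r1.
have key : forall (y d : L) (E : {subfield L}) (sg : bool), y \in E -> d \in E ->
    (- mL - y + (-1) ^+ sg * d / (3 * y^+2 + 2 * mL * y + nL)) / 2 \in E.
  move=> y d E sg hy hd'.
  rewrite !(rpredM, rpredV, rpredD, rpredN, rpredX, memI, memN).
  all: try first [done | exact: hy | exact: hd' | exact: mem1v].
have eD : (r1 - r2) * (r1 - r3) = 3 * r1^+2 + 2 * mL * r1 + nL.
  by rewrite hm hn /r1 /r2 /r3; ring.
move: D; rewrite eD => D.
split.
- have -> : r2 = (- mL - r1 + (-1) ^+ false * dlt / (3 * r1^+2 + 2 * mL * r1 + nL)) / 2.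
    move: D; rewrite -eD hm /dlt /r1 /r2 /r3 => D; field.
    by move: D; rewrite mulf_eq0 negb_or => /andP[-> ->]; rewrite natL_nz.
  exact: key.
- have -> : r3 = (- mL - r1 + (-1) ^+ true * dlt / (3 * r1^+2 + 2 * mL * r1 + nL)) / 2.
    move: D; rewrite -eD hm /dlt /r1 /r2 /r3 => D; field.
    by move: D; rewrite mulf_eq0 negb_or => /andP[-> ->]; rewrite natL_nz.
  exact: key.
Qed.


Lemma dir_back : ~ (exists k : int, - c = k ^+ 2) -> irreducible_poly (gpoly m n c) ->
  (exists k : int, dmnc m n c = k ^+ 2) -> ('Gal({:L} / 1%VS) \isog Zp 6)%g.
Proof.
move=> nsq girr hk.
have irr := hq_irr girr.
have [hr2 hr3] := K1_r irr (dlt1 hk).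
have ds := dim_s2 nsq.
have dK1 : \dim <<1; r1>> = 3%N := deg3 irr _ root_r1.
have full : (fullv <= <<<<1; r1>>; s>>)%VS.
  apply: gen2; first exact: memv_adjoin.
  - by apply: (subvP (subv_adjoin _ s)); exact: memv_adjoin.
  - by apply: (subvP (subv_adjoin _ s)); exact: hr2.
  - by apply: (subvP (subv_adjoin _ s)); exact: hr3.
have eqL : <<<<1; r1>>; s>>%VS = fullv by apply/eqP; rewrite eqEsubv subvf full.
have adj_le : (adjoin_degree <<1; r1>> s <= 2)%N.
  have := dvdp_leq (monic_neq0 (monic_minPoly 1 s)) (minPolyS s (sub1v <<1; r1>>%AS)).
  by rewrite !size_minPoly -dim_adj ds.
have dimL : \dim {:L} = 6%N.
  have h1 : \dim {:L} = (adjoin_degree <<1; r1>> s * 3)%N by rewrite -eqL dim_Fadjoin dK1.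
  have h3 : (2 %| \dim {:L})%N by rewrite -ds field_dimS // subvf.
  have h0 : (0 < \dim {:L})%N := adim_gt0 _.
  move: h0 h3; rewrite h1; move: adj_le; case: (adjoin_degree _ _) => [|[|[|]]] //.
have cG : #|('Gal({:L} / 1%VS))%g| = 6%N by rewrite cardG dimL.
have nK1 : normalField 1 <<1; r1>>.
  apply/splitting_normalField; first exact: sub1v.
  exists hqL; first exact: alg_polyOver.
  exists [:: r1; r2; r3].
    by rewrite hqLE !big_cons big_nil mulr1 mulrA eqpxx.
  apply/eqP; rewrite eqEsubv; apply/andP; split.
    apply/Fadjoin_seqP; split; first exact: sub1v.
    by move=> z; rewrite !inE => /or3P[] /eqP ->; rewrite ?memv_adjoin.
  apply/FadjoinP; split; first exact: subv_adjoin_seq.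
  by apply: seqv_sub_adjoin; rewrite inE eqxx.
have nS : normalField 1 <<1; s>>.
  apply/splitting_normalField; first exact: sub1v.
  exists ('X^2 + cL%:P).
    by rewrite rpredD ?rpredX ?polyOverX ?polyOverC ?memI.
  exists [:: s; -s].
    have -> : 'X^2 + cL%:P = \prod_(z <- [:: s; -s]) ('X - z%:P).
      by rewrite !big_cons big_nil mulr1 hct /s !(polyCN, polyCM, polyC_exp); ring.
    exact: eqpxx.
  apply/eqP; rewrite eqEsubv; apply/andP; split.
    apply/Fadjoin_seqP; split; first exact: sub1v.
    by move=> z; rewrite !inE => /orP[] /eqP ->; rewrite ?rpredN memv_adjoin.
  apply/FadjoinP; split; first exact: subv_adjoin_seq.
  by apply: seqv_sub_adjoin; rewrite inE eqxx.
have [nN1 cN1] := @normal_card L _ nK1.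
have [nN2 cN2] := @normal_card L _ nS.
apply: (@cyc6 _ _ _ _ cG nN1 nN2).
  by rewrite cN1 dimL dK1.
by rewrite cN2 dimL ds.
Qed.


Lemma LB (a b e : L) (x : rat) : a = x%:A -> a + b + e = - mL -> a*b + a*e + b*e = nL ->
  (forall E : {subfield L}, s \in E -> a \in E -> b \in E -> e \in E -> (fullv <= E)%VS) ->
  (\dim {:L} <= 4)%N.
Proof.
move=> ha h1 h2 hgen.
have hmL : mL = -(a + b + e) by rewrite h1 opprK.
have db : (\dim <<1; b>> <= 2)%N.
  apply: (@T1q L (x + m%:~R) (n%:~R + m%:~R * x + x^+2)).
  rewrite -![_%:A]/(in_alg L _) !rmorphD !rmorphM ?rmorphXn !rmorph_int /= -ha.
  by rewrite hmL -h2; ring.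
have full : (fullv <= <<<<1; b>>; s>>)%VS.
  apply: hgen; first exact: memv_adjoin.
  - by rewrite ha memA.
  - by apply: (subvP (subv_adjoin _ s)); exact: memv_adjoin.
  - have -> : e = - mL - a - b by rewrite hmL; ring.
    have hb : b \in <<<<1; b>>; s>>%VS by apply: (subvP (subv_adjoin _ s)); exact: memv_adjoin.
    by rewrite !rpredB ?rpredN ?memI ?hb // ha memA.
have adj_le : (adjoin_degree <<1; b>> s <= 2)%N.
  have := dvdp_leq (monic_neq0 (monic_minPoly 1 s)) (minPolyS s (sub1v <<1; b>>%AS)).
  rewrite !size_minPoly ltnS -dim_adj => h; exact: leq_trans h dim_s_le.
apply: (leq_trans (dimvS full)); rewrite dim_Fadjoin.
exact: (leq_trans (leq_mul adj_le db) (leqnn 4)).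
Qed.

Lemma G3 (r t : L) (al : rat) : irreducible_poly (hq m n c) ->
  al%:A = t^+2 -> r * t = s -> root hqL r -> False.
Proof.
move=> irr ha hrt hr.
have t0 : t != 0.
  by apply: contra t123 => /eqP t0; rewrite -/s -hrt t0 mulr0.
have : (\dim <<1; r>> <= 2)%N.
  apply: (@T1q L 0 (c%:~R / al)).
  rewrite scale0r mul0r addr0 -[_%:A]/(in_alg L _) fmorph_div rmorph_int /= ha.
  have -> : r = s / t by rewrite -hrt mulfK.
  rewrite expr_div_n s2c; field; exact: t0.
by rewrite (deg3 irr _ hr).
Qed.


Lemma dir_fwd : ('Gal({:L} / 1%VS) \isog Zp 6)%g ->
  [/\ ~ (exists k : int, - c = k ^+ 2), irreducible_poly (gpoly m n c)
    & exists k : int, dmnc m n c = k ^+ 2].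
Proof.
move=> iso; have [cG ab] := @cyc6inv _ _ iso.
have dimL : \dim {:L} = 6%N by rewrite -cardG cG.
have irr : irreducible_poly (hq m n c).
  apply: cubic_irreducible; first by rewrite size_hq.
  move=> x; apply/negP => hx.
  have := rmorph_root (in_alg L) hx; rewrite -/hqL hqLE !rootM !root_XsubC -!orbA.
  have e1 : r1 + r2 + r3 = - mL by rewrite hm /r1 /r2 /r3; ring.
  have e2 : r1 * r2 + r1 * r3 + r2 * r3 = nL by rewrite hn /r1 /r2 /r3; ring.
  case/or3P => /eqP ex.
  - by have := @LB r1 r2 r3 x (esym ex) e1 e2 gen2; rewrite dimL.
  - suff : (\dim {:L} <= 4)%N by rewrite dimL.
    apply: (@LB r2 r1 r3 x (esym ex)).
    + by rewrite -e1; ring.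
    + by rewrite -e2; ring.
    + by move=> E hs h2 h1 h3; apply: gen2.
  - suff : (\dim {:L} <= 4)%N by rewrite dimL.
    apply: (@LB r3 r1 r2 x (esym ex)).
    + by rewrite -e1; ring.
    + by rewrite -e2; ring.
    + by move=> E hs h3 h1 h2; apply: gen2.
have girr : irreducible_poly (gpoly m n c).
  apply: cubic_irreducible; first by rewrite size_gp.
  move=> al; apply/negP => hal.
  have := rmorph_root (in_alg L) hal; rewrite -/gL => /rootP.
  rewrite gL_t => /eqP; rewrite !mulf_eq0 -!orbA !subr_eq0 => /or3P[] /eqP e.
  - by apply: (@G3 r1 t1 al irr e _ root_r1); rewrite /r1 /s; ring.
  - by apply: (@G3 r2 t2 al irr e _ root_r2); rewrite /r2 /s; ring.
  - by apply: (@G3 r3 t3 al irr e _ root_r3); rewrite /r3 /s; ring.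
have nK1 := @normal_of_abelian L <<1; r1>>%AS ab.
have dK1 : \dim <<1; r1>> = 3%N := deg3 irr _ root_r1.
have [hr2 hr3] : r2 \in <<1; r1>>%VS /\ r3 \in <<1; r1>>%VS.
  have /normalFieldP hN := nK1; have [rr /allP hrr hmin] := hN r1 (memv_adjoin 1 r1).
  have dv : minPoly 1 r1 %| hqL := minPoly_dvdp (alg_polyOver _ _) root_r1.
  have sz : size (minPoly 1 r1) = size hqL.
    by rewrite size_minPoly -dim_adj dK1 /hqL size_map_poly size_hq.
  have E : minPoly 1 r1 %= hqL by rewrite -dvdp_size_eqp // sz.
  have inrr z : root hqL z -> z \in <<1; r1>>%VS.
    by rewrite -(eqp_root E) hmin root_prod_XsubC => /hrr.
  by split; apply: inrr; [exact: root_r2 | exact: root_r3].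
split.
- case=> k hk.
  have hs1 : s \in 1%VS.
    have : (s - k%:~R) * (s + k%:~R) == 0 by rewrite -subr_sqr s2c -rmorphN hk rmorphXn subrr.
    rewrite mulf_eq0 subr_eq0 addr_eq0 => /orP[] /eqP ->; by rewrite ?rpredN memI.
  have full : (fullv <= <<1; r1>>)%VS.
    apply: gen2 => //; first by apply: (subvP (sub1v _)).
    exact: memv_adjoin.
  by have := dimvS full; rewrite dimL dK1.
- exact: girr.
have hdK : dlt \in <<1; r1>>%VS.
  have key : forall (y z w : L) (E : {subfield L}), y \in E -> z \in E -> w \in E ->
      (y - z) * (y - w) * (z - w) \in E.
    by move=> y z w E hy hz hw; rewrite !rpredM ?rpredB.
  by apply: key => //; exact: memv_adjoin.
have dd : \dim <<1; dlt>> = 1%N.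
  have h1 : (\dim <<1; dlt>> <= 2)%N.
    apply: (@T1q L 0 (- (dmnc m n c)%:~R)).
    by rewrite scale0r mul0r addr0 -[_%:A]/(in_alg L _) rmorphN rmorph_int dL subrr.
  have h2 : (\dim <<1; dlt>> %| 3)%N by rewrite -dK1 field_dimS // sub_adjoin1v.
  have h0 := adim_gt0 <<1; dlt>>%VS.
  move: h0 h1 h2; case: (\dim _) => [|[|[|]]] //.
have h1 : dlt \in 1%VS by rewrite T3 dd.
have [q hq'] := @T4 L dlt h1.
have : in_alg L (q^+2) = in_alg L ((dmnc m n c)%:~R).
  by rewrite rmorphXn /= -hq' -[_%:A]/(in_alg L _) -iLE dL.
move/fmorph_inj => e; have [k hk] := @ratsq q _ e.
by exists k; apply/eqP; rewrite -(eqr_int rat) -e hk rmorphXn.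
Qed.

End S.


Theorem lemma2p4 (m n c : int) (hc : c != 0) (hdvd : (c %| n ^+ 2)%Z)
  (L : splittingFieldType rat)
  (hL : splittingFieldFor 1%VS (map_poly (in_alg L) (fpoly m n c)) {:L}) :
  ('Gal({:L} / 1%VS) \isog Zp 6)%g <->
  [/\ ~ (exists k : int, - c = k ^+ 2),
      irreducible_poly (gpoly m n c)
    & exists k : int, dmnc m n c = k ^+ 2].
Proof.
have [t1 [t2 [t3 [hm hn hct]]]] := @exists_t m n c L hc hdvd hL.
split; first exact: (@dir_fwd m n c L hc hdvd hL t1 t2 t3 hm hn hct).
by case=> h1 h2 h3; exact: (@dir_back m n c L hc hdvd hL t1 t2 t3 hm hn hct h1 h2 h3).
Qed.
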